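(* Let $r>0$ and let $f:(0,r)\to(0,\infty)$ be a nondecreasing function such that $f(x)<x$ for all $x\in(0,r)$ and, for every $\alpha>1$, $f(x)=O(x^\alpha)$ as $x\to0^+$. For $x_1\in(0,r)$ let $x_{n+1}=x_n-f(x_n)$ and $S=\{x_n:n\ge1\}$. Then $\dim_BS=1$.
   Context: For a bounded set $S\subset\mathbb{R}$ and $\varepsilon>0$, $S_\varepsilon=\{y: \mathrm{dist}(y,S)<\varepsilon\}$ and $|S_\varepsilon|$ is its Lebesgue measure. $\mathcal M^{*s}(S)=\limsup_{\varepsilon\to0}|S_\varepsilon|/\varepsilon^{1-s}$, $\mathcal M_*^{s}(S)=\liminf_{\varepsilon\to0}|S_\varepsilon|/\varepsilon^{1-s}$; $\overline{\dim}_BS=\inf\{s\ge0:\mathcal M^{*s}(S)=0\}$, $\underline{\dim}_BS=\inf\{s\ge0:\mathcal M_*^{s}(S)=0\}$, and $\dim_BS$ is their common value when equal. *)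

(* Defs.v *)
From Stdlib Require Import Reals.
Open Scope R_scope.

(* epsilon-neighbourhood S_eps = {y : dist(y,S) < eps}; dist(y,S) < eps iff
   some z in S has |y - z| < eps. *)
Definition nbhd (S : R -> Prop) (eps : R) : R -> Prop :=
  fun y => exists z, S z /\ Rabs (y - z) < eps.

Definition is_glb (E : R -> Prop) (m : R) : Prop :=
  (forall x, E x -> m <= x) /\ (forall b, (forall x, E x -> b <= x) -> b <= m).

(* Lebesgue (outer) measure: infimum of total lengths of countable covers by
   open intervals (a n, b n).  [leb_measure_is A m] : the measure of A is the
   real number m (only meaningful/used for bounded A, where it is finite). *)
Definition cover_length (A : R -> Prop) (L : R) : Prop :=
  exists a b : nat -> R,
    (forall n, a n <= b n) /\
    (forall y, A y -> exists n, a n < y < b n) /\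
    infinite_sum (fun n => b n - a n) L.

Definition leb_measure_is (A : R -> Prop) (m : R) : Prop :=
  is_glb (cover_length A) m.

(* M^{*s}(S) = limsup_{eps->0+} |S_eps| / eps^(1-s) = 0
   (the quantity is nonnegative, so limsup = 0 means it tends to 0). *)
Definition upper_mink_zero (S : R -> Prop) (s : R) : Prop :=
  forall eta, 0 < eta -> exists delta, 0 < delta /\
    forall eps, 0 < eps < delta ->
      forall m, leb_measure_is (nbhd S eps) m -> m / Rpower eps (1 - s) < eta.

(* M_*^{s}(S) = liminf_{eps->0+} |S_eps| / eps^(1-s) = 0 *)
Definition lower_mink_zero (S : R -> Prop) (s : R) : Prop :=
  forall eta, 0 < eta -> forall delta, 0 < delta ->
    exists eps, 0 < eps < delta /\
      forall m, leb_measure_is (nbhd S eps) m -> m / Rpower eps (1 - s) < eta.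

Definition upper_box_dim_is (S : R -> Prop) (d : R) : Prop :=
  is_glb (fun s => 0 <= s /\ upper_mink_zero S s) d.
Definition lower_box_dim_is (S : R -> Prop) (d : R) : Prop :=
  is_glb (fun s => 0 <= s /\ lower_mink_zero S s) d.

Definition box_dim_is (S : R -> Prop) (d : R) : Prop :=
  upper_box_dim_is S d /\ lower_box_dim_is S d.

(* Main.v *)
Require Import Defs.
From Stdlib Require Import Reals Lra Lia Classical List.
Open Scope R_scope.

Definition lsum (l : list (R*R)) : R :=
  fold_right (fun p acc => snd p - fst p + acc) 0 l.

Lemma lsum_app l1 l2 : lsum (l1 ++ l2) = lsum l1 + lsum l2.
Proof. induction l1 as [|p l1 IH]; simpl; [lra|]. rewrite IH; lra. Qed.

Lemma lsum_nonneg l : (forall p, In p l -> fst p <= snd p) -> 0 <= lsum l.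
Proof.
  induction l as [|p l IH]; simpl; intros H; [lra|].
  assert (H1 := H p (or_introl eq_refl)).
  assert (0 <= lsum l) by (apply IH; intros; apply H; auto). lra.
Qed.

Lemma finite_len : forall n (l : list (R*R)), length l = n ->
  (forall p, In p l -> fst p <= snd p) -> forall c d, c <= d ->
  (forall y, c <= y <= d -> exists p, In p l /\ fst p < y < snd p) ->
  d - c <= lsum l.
Proof.
  induction n as [|n IH]; intros l Hl Hle c d Hcd Hcov.
  - destruct l; [|discriminate]. destruct (Hcov c) as [p [[] _]]. lra.
  - destruct (Hcov c) as [p [Hp Hc]]; [lra|].
    destruct (in_split _ _ Hp) as [l1 [l2 ->]].
    assert (Heq : lsum (l1 ++ p :: l2) = (snd p - fst p) + lsum (l1 ++ l2)).
    { rewrite !lsum_app. simpl. lra. }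
    assert (Hin : forall q, In q (l1 ++ l2) -> In q (l1 ++ p :: l2)).
    { intros q Hq. apply in_or_app. destruct (in_app_or _ _ _ Hq); simpl; auto. }
    assert (Hnn : 0 <= lsum (l1 ++ l2)).
    { apply lsum_nonneg. intros; apply Hle; auto. }
    rewrite Heq.
    destruct (Rle_or_lt (snd p) d) as [Hb|Hb]; [|lra].
    assert (d - snd p <= lsum (l1 ++ l2)); [|lra].
    apply (IH (l1 ++ l2)).
    + rewrite length_app in *. simpl in Hl. lia.
    + intros; apply Hle; auto.
    + lra.
    + intros y Hy. destruct (Hcov y) as [q [Hq Hqy]]; [lra|].
      exists q; split; [|auto].
      destruct (in_app_or _ _ _ Hq) as [H|H]; [apply in_or_app; auto|].
      destruct H as [<-|H]; [lra|apply in_or_app; auto].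
Qed.

Lemma finite_subcover (a b : nat -> R) c d : c <= d ->
  (forall y, c <= y <= d -> exists n, a n < y < b n) ->
  exists M, forall y, c <= y <= d -> exists n, (n < M)%nat /\ a n < y < b n.
Proof.
  intros Hcd Hcov.
  set (E := fun t => c <= t <= d /\ exists M, forall y, c <= y <= t ->
                exists n, (n < M)%nat /\ a n < y < b n).
  assert (Ec : E c).
  { split; [lra|]. destruct (Hcov c) as [n0 Hn0]; [lra|]. exists (S n0).
    intros y Hy. exists n0. split; [lia|]. replace y with c by lra. auto. }
  assert (Hb : bound E) by (exists d; intros t [Ht _]; lra).
  destruct (completeness E Hb (ex_intro _ c Ec)) as [s [Hs1 Hs2]].
  assert (Hcs : c <= s) by (apply Hs1; auto).
  assert (Hsd : s <= d) by (apply Hs2; intros t [Ht _]; lra).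
  destruct (Hcov s) as [k Hk]; [lra|].
  assert (Ht : exists t, E t /\ a k < t).
  { apply NNPP; intro Hn.
    assert (s <= a k); [|lra].
    apply Hs2. intros t Et. apply Rnot_lt_le. intro Hlt. apply Hn. eauto. }
  destruct Ht as [t [[Ht [M HM]] Hkt]].
  assert (Hext : forall u, c <= u -> u <= d -> u < b k -> E u).
  { intros u H1 H2 H3. split; [lra|]. exists (Nat.max M (S k)).
    intros y Hy. destruct (Rle_or_lt y t) as [Hyt|Hyt].
    - destruct (HM y) as [n [Hn Hny]]; [lra|]. exists n. split; [lia|auto].
    - exists k. split; [lia|lra]. }
  destruct (Rle_or_lt d ((s + b k) / 2)) as [Hd|Hd].
  - destruct (Hext d) as [_ HMd]; [lra|lra|lra|]. exact HMd.
  - assert ((s + b k) / 2 <= s); [|lra].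
    apply Hs1. apply Hext; lra.
Qed.

Lemma lsum_seq (a b : nat -> R) M :
  lsum (map (fun n => (a n, b n)) (seq 0 M)) + (b M - a M) =
  sum_f_R0 (fun n => b n - a n) M.
Proof.
  induction M as [|M IH]; [simpl; lra|]. cbn [sum_f_R0]. rewrite <- IH.
  rewrite seq_S, map_app, lsum_app. simpl. lra.
Qed.

Lemma cover_ge (A : R -> Prop) L Lc : 0 < L -> (forall y, 0 < y < L -> A y) ->
  cover_length A Lc -> L <= Lc.
Proof.
  intros HL HA [a [b [Hab [Hcov Hsum]]]].
  assert (Hgr : Un_growing (sum_f_R0 (fun n => b n - a n))).
  { intro n. simpl. specialize (Hab (S n)). lra. }
  assert (Hpart := growing_ineq _ _ Hgr Hsum).
  assert (Key : forall del, 0 < del < L / 2 -> L - 2 * del <= Lc).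
  { intros del Hdel.
    destruct (finite_subcover a b del (L - del)) as [M HM]; [lra| |].
    { intros y Hy. apply Hcov, HA. lra. }
    assert (H1 : (L - del) - del <= lsum (map (fun n => (a n, b n)) (seq 0 M))).
    { apply (finite_len _ _ eq_refl).
      - intros p Hp. apply in_map_iff in Hp. destruct Hp as [n [<- _]]. simpl; auto.
      - lra.
      - intros y Hy. destruct (HM y Hy) as [n [Hn Hny]].
        exists (a n, b n). split; [|simpl; auto].
        apply in_map_iff. exists n. split; auto. apply in_seq. lia. }
    assert (H2 := lsum_seq a b M). specialize (Hpart M). specialize (Hab M). lra. }
  apply Rnot_lt_le. intro Hlt.
  set (del := Rmin (L / 4) ((L - Lc) / 4)).
  assert (del <= L/4) by apply Rmin_l. assert (del <= (L - Lc)/4) by apply Rmin_r.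
  assert (0 < del) by (unfold del; apply Rmin_case; lra).
  specialize (Key del). lra.
Qed.

Lemma measure_ge (A : R -> Prop) L m : 0 < L -> (forall y, 0 < y < L -> A y) ->
  leb_measure_is A m -> L <= m.
Proof.
  intros HL HA [_ Hm]. apply Hm. intros Lc HLc. eapply cover_ge; eauto.
Qed.

Lemma measure_le (A : R -> Prop) lo hi m : lo <= hi ->
  (forall y, A y -> lo < y < hi) -> leb_measure_is A m -> m <= hi - lo.
Proof.
  intros Hlh HA [Hm _]. apply Hm.
  exists (fun n => match n with O => lo | _ => 0 end),
         (fun n => match n with O => hi | _ => 0 end).
  split; [intros [|n]; lra|]. split.
  - intros y Hy. exists O. auto.
  - intros e He. exists O. intros n _.
    replace (sum_f_R0 _ n) with (hi - lo).
    + unfold Rdist. rewrite Rminus_diag, Rabs_R0. lra.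
    + induction n; simpl; auto. rewrite <- IHn. lra.
Qed.

Lemma measure_exists (A : R -> Prop) lo hi : lo <= hi ->
  (forall y, A y -> lo < y < hi) -> exists m, leb_measure_is A m.
Proof.
  intros Hlh HA.
  set (E := fun t => cover_length A (- t)).
  assert (Hne : exists t, E t).
  { exists (lo - hi). unfold E.
    exists (fun n => match n with O => lo | _ => 0 end),
           (fun n => match n with O => hi | _ => 0 end).
    split; [intros [|n]; lra|]. split.
    - intros y Hy. exists O. auto.
    - intros e He. exists O. intros n _.
      replace (sum_f_R0 _ n) with (- (lo - hi)).
      + unfold Rdist. rewrite Rminus_diag, Rabs_R0. lra.
      + induction n; simpl; auto; [lra|]. rewrite <- IHn. lra. }
  assert (Hb : bound E).
  { exists 0. intros t [a [b [Hab [_ Hs]]]].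
    assert (Hgr : Un_growing (sum_f_R0 (fun n => b n - a n))).
    { intro n. simpl. specialize (Hab (S n)). lra. }
    apply Rnot_lt_le. intro Ht.
    destruct (Hs (t / 2)) as [N HN]; [lra|].
    specialize (HN N (le_n N)). unfold Rdist in HN.
    assert (0 <= sum_f_R0 (fun n => b n - a n) N).
    { clear HN. induction N; simpl; [specialize (Hab O); lra|].
      specialize (Hab (S N)); lra. }
    apply Rabs_def2 in HN. lra. }
  destruct (completeness E Hb Hne) as [s [Hs1 Hs2]].
  exists (- s). split.
  - intros L HL. assert (- L <= s) by (apply Hs1; unfold E; rewrite Ropp_involutive; auto). lra.
  - intros b Hb'. assert (s <= - b); [|lra].
    apply Hs2. intros t Et. specialize (Hb' _ Et). lra.
Qed.

Lemma first_cross (P : nat -> Prop) n : ~ P O -> P n -> exists j, ~ P j /\ P (S j).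
Proof.
  intros H0. induction n as [|n IH]; intros Hn; [contradiction|].
  destruct (classic (P n)) as [Hp|Hp]; [apply IH; auto|eauto].
Qed.

Lemma decr_contra (u : nat -> R) c : 0 < c -> (forall n, 0 < u n) ->
  ~ (forall n, u (S n) <= u n - c).
Proof.
  intros Hc Hu H.
  assert (Hb : forall n, u n <= u O - INR n * c).
  { induction n; [simpl; lra|]. rewrite S_INR. specialize (H n). lra. }
  destruct (INR_unbounded (u O / c)) as [n Hn].
  specialize (Hb n). specialize (Hu n).
  assert (u O < INR n * c).
  { apply (Rmult_lt_compat_r c) in Hn; auto. unfold Rdiv in Hn.
    rewrite Rmult_assoc, Rinv_l in Hn; lra. }
  lra.
Qed.

Lemma Rpower_pos a b : 0 < Rpower a b.
Proof. unfold Rpower. apply exp_pos. Qed.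

Lemma Rpower_le_sq t alpha : 0 < t < 1 -> 2 <= alpha -> Rpower t alpha <= t ^ 2.
Proof.
  intros Ht Ha. replace (t ^ 2) with (Rpower t (INR 2)) by (apply Rpower_pow; lra).
  simpl INR. unfold Rpower.
  assert (ln t < 0) by (rewrite <- ln_1; apply ln_increasing; lra).
  destruct (Req_dec alpha 2) as [->|Hne]; [replace (1+1) with 2 by lra; lra|].
  apply Rlt_le, exp_increasing. nra.
Qed.

Theorem theorem6 (r : R) (f : R -> R) (x : nat -> R)
  (hr : 0 < r)
  (hpos : forall t, 0 < t < r -> 0 < f t)
  (hmono : forall s t, 0 < s < r -> 0 < t < r -> s <= t -> f s <= f t)
  (hlt : forall t, 0 < t < r -> f t < t)
  (hbig : forall alpha, 1 < alpha -> exists C delta, 0 < delta /\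
            forall t, 0 < t < r -> t < delta -> Rabs (f t) <= C * Rpower t alpha)
  (hx1 : 0 < x O < r)
  (hrec : forall n, x (S n) = x n - f (x n)) :
  box_dim_is (fun y => exists n, y = x n) 1.
Proof.
  set (Sx := fun y => exists n, y = x n).
  assert (Hpos : forall n, 0 < x n < r).
  { induction n; auto. rewrite hrec. specialize (hlt _ IHn). specialize (hpos _ IHn). lra. }
  assert (Hdec : forall m n, (m <= n)%nat -> x n <= x m).
  { intros m n H. induction H; [lra|]. rewrite hrec. specialize (hpos _ (Hpos m0)). lra. }
  assert (Hfdec : forall m n, (m <= n)%nat -> f (x n) <= f (x m)).
  { intros m n H. apply hmono; auto. }
  assert (Hto0 : forall y, 0 < y -> exists n, x n < y).
  { intros y Hy. destruct (Rle_or_lt r y) as [Hry|Hry].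
    { exists O. specialize (Hpos O). lra. }
    apply NNPP. intro Hn.
    apply (decr_contra x (f y)); [apply hpos; lra| intros; apply Hpos|].
    intro n. rewrite hrec.
    assert (y <= x n) by (apply Rnot_lt_le; intro; apply Hn; eauto).
    assert (f y <= f (x n)) by (apply hmono; auto; lra). lra. }
  assert (Hbnd : forall eps y, nbhd Sx eps y -> - eps < y < r + eps).
  { intros eps y [z [[n ->] Hz]]. specialize (Hpos n).
    apply Rabs_def2 in Hz. lra. }
  assert (Hcovint : forall eps N, 0 < eps -> f (x N) < 2 * eps ->
            forall y, 0 < y < x N -> nbhd Sx eps y).
  { intros eps N He HN y Hy.
    destruct (Hto0 y) as [n1 Hn1]; [lra|].
    destruct (first_cross (fun n => x (N + n)%nat < y) n1) as [j [Hj1 Hj2]].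
    { rewrite Nat.add_0_r. lra. }
    { assert (x (N + n1)%nat <= x n1) by (apply Hdec; lia). simpl. lra. }
    simpl in Hj1, Hj2. apply Rnot_lt_le in Hj1.
    rewrite Nat.add_succ_r, hrec in Hj2.
    assert (f (x (N + j)%nat) <= f (x N)) by (apply Hfdec; lia).
    destruct (Rlt_or_le (x (N + j)%nat - y) eps) as [H1|H1].
    - exists (x (N + j)%nat). split; [eexists; eauto|]. apply Rabs_def1; lra.
    - exists (x (S (N + j))). split; [eexists; eauto|]. rewrite hrec. apply Rabs_def1; lra. }
  assert (Upper : forall s, 1 < s -> upper_mink_zero Sx s).
  { intros s Hs eta Heta.
    set (K := r + 2).
    set (d0 := Rpower (eta / K) (/ (s - 1))).
    assert (Hd0 : 0 < d0) by apply Rpower_pos.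
    exists (Rmin 1 d0). split; [apply Rmin_case; lra|].
    intros eps Heps m Hm.
    assert (Hle1 : eps < 1) by (assert (Rmin 1 d0 <= 1) by apply Rmin_l; lra).
    assert (Hled : eps < d0) by (assert (Rmin 1 d0 <= d0) by apply Rmin_r; lra).
    assert (Hm1 : m <= (r + eps) - (- eps)) by (apply (measure_le (nbhd Sx eps) (- eps) (r + eps) m ltac:(lra) (Hbnd eps) Hm)).
    unfold Rdiv. rewrite <- Rpower_Ropp. replace (- (1 - s)) with (s - 1) by ring.
    assert (HQ : Rpower eps (s - 1) < eta / K).
    { replace (eta / K) with (Rpower d0 (s - 1)).
      - apply Rlt_Rpower_l; lra.
      - unfold d0. rewrite Rpower_mult, Rinv_l by lra. apply Rpower_1.
        unfold K. apply Rdiv_lt_0_compat; lra. }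
    assert (HQp : 0 < Rpower eps (s - 1)) by apply Rpower_pos.
    assert (m * Rpower eps (s - 1) <= K * Rpower eps (s - 1)).
    { apply Rmult_le_compat_r; unfold K; lra. }
    assert (K * Rpower eps (s - 1) < K * (eta / K)).
    { apply Rmult_lt_compat_l; [unfold K; lra|exact HQ]. }
    replace (K * (eta / K)) with eta in * by (field; unfold K; lra). lra. }
  assert (UpLow : forall s, upper_mink_zero Sx s -> lower_mink_zero Sx s).
  { intros s H eta Heta delta Hdelta.
    destruct (H eta Heta) as [d' [Hd' Hall]].
    exists (Rmin delta d' / 2).
    assert (Rmin delta d' <= delta) by apply Rmin_l.
    assert (Rmin delta d' <= d') by apply Rmin_r.
    assert (0 < Rmin delta d') by (apply Rmin_case; lra).
    split; [lra|]. apply Hall. lra. }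
  assert (NotLow : forall s, 0 <= s < 1 -> ~ lower_mink_zero Sx s).
  { intros s Hs Hlow.
    set (beta := 1 - s). set (alpha := 2 / beta).
    assert (Hbeta : 0 < beta <= 1) by (unfold beta; lra).
    assert (Halpha : 2 <= alpha).
    { unfold alpha. apply (Rmult_le_reg_r beta); [lra|].
      unfold Rdiv. rewrite Rmult_assoc, Rinv_l by lra. nra. }
    destruct (hbig alpha ltac:(lra)) as [C0 [d0 [Hd0 HC0]]].
    set (C := Rmax 1 C0).
    assert (HC1 : 1 <= C) by apply Rmax_l.
    assert (HC : forall t, 0 < t < r -> t < d0 -> f t <= C * Rpower t alpha).
    { intros t Ht Htd. specialize (HC0 t Ht Htd).
      assert (0 < f t) by auto. rewrite Rabs_pos_eq in HC0 by lra.
      assert (C0 <= C) by apply Rmax_r.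
      assert (0 < Rpower t alpha) by apply Rpower_pos.
      assert (C0 * Rpower t alpha <= C * Rpower t alpha) by (apply Rmult_le_compat_r; lra).
      lra. }
    set (d1 := Rmin (Rmin d0 r) (Rmin 1 (/ (2 * C)))).
    assert (Hd1a : d1 <= d0) by (unfold d1; eapply Rle_trans; apply Rmin_l).
    assert (Hd1b : d1 <= r) by (unfold d1; eapply Rle_trans; [apply Rmin_l|apply Rmin_r]).
    assert (Hd1c : d1 <= 1) by (unfold d1; eapply Rle_trans; [apply Rmin_r|apply Rmin_l]).
    assert (Hd1d : d1 <= / (2 * C)) by (unfold d1; eapply Rle_trans; apply Rmin_r).
    assert (HiC : 0 < / (2 * C)) by (apply Rinv_0_lt_compat; lra).
    assert (Hd1 : 0 < d1) by (unfold d1; repeat apply Rmin_case; lra).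
    destruct (Hto0 d1 Hd1) as [K HK].
    assert (HfK : 0 < f (x K)) by auto.
    assert (HiC' : 0 < / C) by (apply Rinv_0_lt_compat; lra).
    set (delta := Rmin (f (x K) / 2) (Rmin 1 (/ C))).
    assert (Hdl1 : delta <= f (x K) / 2) by apply Rmin_l.
    assert (Hdl2 : delta <= 1) by (unfold delta; eapply Rle_trans; [apply Rmin_r|apply Rmin_l]).
    assert (Hdl3 : delta <= / C) by (unfold delta; eapply Rle_trans; apply Rmin_r).
    assert (Hdl : 0 < delta) by (unfold delta; repeat apply Rmin_case; lra).
    destruct (Hlow (1/2) ltac:(lra) delta Hdl) as [eps [Heps Hall]].
    destruct (measure_exists (nbhd Sx eps) (- eps) (r + eps) ltac:(lra) (Hbnd eps)) as [m Hm].
    specialize (Hall m Hm).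
    assert (Hex : exists n, f (x n) < 2 * eps).
    { apply NNPP. intro Hn. apply (decr_contra x (2 * eps)); [lra|intros; apply Hpos|].
      intro n. rewrite hrec. assert (~ f (x n) < 2 * eps) by (intro; apply Hn; eauto). lra. }
    destruct Hex as [n2 Hn2].
    destruct (first_cross (fun n => f (x n) < 2 * eps) n2) as [j [Hj1 Hj2]]; auto.
    { assert (f (x K) <= f (x O)) by (apply Hfdec; lia). lra. }
    apply Rnot_lt_le in Hj1.
    assert (HjK : (K <= j)%nat).
    { destruct (Nat.le_gt_cases K j) as [H|H]; auto.
      assert (f (x K) <= f (x (S j))) by (apply Hfdec; lia). lra. }
    assert (Hxj : x j <= x K) by (apply Hdec; auto).
    assert (Hxjp := Hpos j).
    assert (Hfj : f (x j) <= C * Rpower (x j) alpha) by (apply HC; auto; lra).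
    assert (Hpe : 0 < Rpower eps beta) by apply Rpower_pos.
    assert (Hlow1 : Rpower eps beta <= x j).
    { apply Rnot_lt_le. intro Hlt.
      assert (Rpower (x j) alpha < Rpower (Rpower eps beta) alpha) by (apply Rlt_Rpower_l; lra).
      rewrite Rpower_mult in H.
      replace (beta * alpha) with (INR 2) in H by (unfold alpha; simpl; field; lra).
      rewrite Rpower_pow in H by lra.
      assert (C * Rpower (x j) alpha < C * eps ^ 2) by (apply Rmult_lt_compat_l; lra).
      assert (C * eps < 1).
      { assert (C * eps < C * / C) by (apply Rmult_lt_compat_l; lra).
        rewrite Rinv_r in H1; lra. }
      simpl in H0. nra. }
    assert (Hhalf : f (x j) <= x j / 2).
    { assert (Rpower (x j) alpha <= x j ^ 2) by (apply Rpower_le_sq; lra).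
      assert (C * x j <= / 2).
      { assert (C * x j <= C * / (2 * C)) by (apply Rmult_le_compat_l; lra).
        replace (C * / (2 * C)) with (/ 2) in H0 by (field; lra). lra. }
      assert (C * Rpower (x j) alpha <= C * x j ^ 2) by (apply Rmult_le_compat_l; lra).
      simpl in H1. nra. }
    assert (HxS : x j / 2 <= x (S j)) by (rewrite hrec; lra).
    assert (Hmge : x (S j) <= m).
    { apply (measure_ge (nbhd Sx eps)); auto.
      - apply Hpos.
      - intros y Hy. apply (Hcovint eps (S j)); auto; lra. }
    unfold beta in Hpe, Hlow1.
    assert (Rpower eps (1 - s) / 2 <= m) by lra.
    assert (1/2 <= m / Rpower eps (1 - s)).
    { apply (Rmult_le_reg_r (Rpower eps (1 - s))); [lra|].
      replace (m / Rpower eps (1 - s) * Rpower eps (1 - s)) with m by (field; lra). lra. }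
    lra. }
  assert (Glb : forall (P : R -> Prop), (forall s, 1 < s -> P s) ->
            (forall s, 0 <= s < 1 -> ~ P s) -> is_glb (fun s => 0 <= s /\ P s) 1).
  { intros P H1 H2. split.
    - intros s [Hs HP]. apply Rnot_lt_le. intro Hlt. apply (H2 s); auto.
    - intros b Hb. apply Rnot_lt_le. intro Hlt.
      assert (b <= (1 + b) / 2) by (apply Hb; split; [lra|apply H1; lra]). lra. }
  split.
  - apply Glb; auto. intros s Hs HU. apply (NotLow s Hs), UpLow, HU.
  - apply Glb; auto.
Qed.
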